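(* Let $P$ be a finite lattice and $R\in\mathrm{Tr}(P)$. The fiber $\chi^{-1}\{\chi^R\}$ of $\chi\colon\mathrm{Tr}(P)\to\mathrm{End}^\circ(P)$ has a least element, namely $$\tilde R=\langle\{(x,y)\in P\times P: \chi^R(y)=x\text{ or }x=y\}\rangle.$$
   Context: For a finite lattice $(P,\le)$, a transfer system on $P$ is a partial order $R$ on $P$ refining $\le$ (i.e. $x\,R\,y\Rightarrow x\le y$) that is closed under restriction: if $x\,R\,z$ and $y\le z$ then $(x\wedge y)\,R\,y$. $\mathrm{Tr}(P)$ is the set of transfer systems ordered by inclusion of relations. For a set $Q$ of pairs $(x,y)$ with $x\le y$, $\langle Q\rangle$ is the transfer system generated by $Q$, i.e. the intersection of all transfer systems containing $Q$. For $R\in\mathrm{Tr}(P)$, $\chi^R(x)$ is the least element of $\{y: y\,R\,x\}$ (which exists). $\mathrm{End}^\circ(P)$ is the set of interior operators (monotone $f$ with $f(x)\le x$, $f\circ f=f$), and $\chi\colon R\mapsto\chi^R$ lands in it. *)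

(* Defs.v *)
From HB Require Import structures.
From mathcomp Require Import all_boot all_order.
From Stdlib Require Import ClassicalEpsilon.
Set Implicit Arguments. Unset Strict Implicit. Unset Printing Implicit Defensive.
Import Order.TTheory.
Local Open Scope order_scope.

Definition relP (T : Type) := T -> T -> Prop.

Definition is_transfer d (P : finLatticeType d) (R : relP P) : Prop :=
  [/\ (forall x, R x x),
      (forall x y, R x y -> R y x -> x = y),
      (forall x y z, R x y -> R y z -> R x z),
      (forall x y, R x y -> x <= y)
    & (forall x y z, R x z -> y <= z -> R (x `&` y) y)].

Definition gen_transfer d (P : finLatticeType d) (Q : relP P) : relP P :=
  fun x y => forall S : relP P, is_transfer S ->
    (forall a b, Q a b -> S a b) -> S x y.

Definition least_below d (P : finLatticeType d) (R : relP P) (x y : P) : Prop :=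
  R y x /\ forall z, R z x -> y <= z.

(* chi^R(x): the least element of {y : y R x} (defaults to x if none exists,
   which never happens for a transfer system). *)
Definition chi d (P : finLatticeType d) (R : relP P) (x : P) : P :=
  match excluded_middle_informative (exists y, least_below R x y) with
  | left h => proj1_sig (constructive_indefinite_description _ h)
  | right _ => x
  end.

(* Main.v *)
Require Import Defs.
From mathcomp Require Import all_boot all_order.
From Stdlib Require Import ClassicalEpsilon FunctionalExtensionality.
Import Order.TTheory.
Local Open Scope order_scope.

Section Aux.
Variables (d : Order.disp_t) (P : finLatticeType d).

Definition fm (S : relP P) (x : P) (s : seq P) : P :=
  foldr (fun y acc => if excluded_middle_informative (S y x) then y `&` acc else acc) x s.

Lemma fm_spec (S : relP P) x s : is_transfer S ->
  S (fm S x s) x /\ forall z, z \in s -> S z x -> fm S x s <= z.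
Proof.
move=> [Hr Ha Ht Hl Hres]; elim: s => [|y s [IH1 IH2]] /=.
  by split=> // z; rewrite in_nil.
case: excluded_middle_informative => Hy.
  split.
    apply: Ht (IH1); apply: Hres Hy (Hl _ _ IH1).
  move=> z; rewrite in_cons => /orP [/eqP -> _|zs Hz]; first exact: leIl.
  exact: le_trans (leIr _ _) (IH2 _ zs Hz).
split=> // z; rewrite in_cons => /orP [/eqP -> //|zs Hz]; exact: IH2.
Qed.

Lemma exists_least (S : relP P) x : is_transfer S -> exists y, least_below S x y.
Proof.
move=> HS; have [H1 H2] := fm_spec S x (enum P) HS.
exists (fm S x (enum P)); split=> // z Hz; apply: H2 Hz; by rewrite mem_enum.
Qed.

Lemma chi_spec (S : relP P) x : is_transfer S -> least_below S x (chi S x).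
Proof.
move=> HS; rewrite /chi; case: excluded_middle_informative => h.
  exact: proj2_sig (constructive_indefinite_description _ h).
by case: h; apply: exists_least.
Qed.

Lemma least_uniq (S : relP P) x y z : least_below S x y -> least_below S x z -> y = z.
Proof.
move=> [Hy1 Hy2] [Hz1 Hz2]; apply/le_anti; rewrite Hy2 // Hz2 //.
Qed.

End Aux.

Theorem theorem2p12 (d : Order.disp_t) (P : finLatticeType d) (R : relP P) :
  is_transfer R ->
  let Rt := gen_transfer (fun x y : P => chi R y = x \/ x = y) in
  [/\ is_transfer Rt,
      chi Rt = chi R
    & forall S : relP P, is_transfer S -> chi S = chi R ->
        forall x y, Rt x y -> S x y].
Proof.
move=> HR Rt.
have HRs := HR; case: HRs => [Rr Ra Rtr Rl Rres].
have leT : is_transfer (fun x y : P => x <= y).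
  split=> //.
  - by move=> x y a b; apply/le_anti; rewrite a b.
  - by move=> x y z; apply: le_trans.
  - by move=> x y z _ _; apply: leIr.
have QR : forall a b : P, chi R b = a \/ a = b -> R a b.
  by move=> a b [<-|->]; [case: (@chi_spec _ _ _ b HR)|].
have RtR : forall a b, Rt a b -> R a b by move=> a b H; exact: (H _ HR QR).
have Rtle : forall a b : P, Rt a b -> a <= b.
  move=> a b H; apply: (H _ leT) => a' b' /QR; exact: Rl.
have HRt : is_transfer Rt.
  split.
  - by move=> x S HS _; case: HS.
  - by move=> x y a b; apply/le_anti; rewrite Rtle // Rtle.
  - by move=> x y z a b S HS HQ; case: (HS) => _ _ T _ _; apply: T (a S HS HQ) (b S HS HQ).
  - exact: Rtle.
  - by move=> x y z a b S HS HQ; case: (HS) => _ _ _ _ T; apply: T (a S HS HQ) b.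
split=> //.
  apply: functional_extensionality => x.
  apply: (@least_uniq _ _ _ _ _ _ (@chi_spec _ _ _ x HRt)); split.
    by move=> S _ HQ; apply: HQ; left.
  by move=> z /RtR Hz; case: (@chi_spec _ _ _ x HR) => _; apply.
move=> S HS HSR x y H; apply: (H S HS) => a b [<-|->].
  by rewrite -HSR; case: (@chi_spec _ _ _ b HS).
by case: (HS).
Qed.
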